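(* Let $p\in\mathbb{R}^d$, $\epsilon>0$, and $\psi:\mathbb{R}^d\to[0,1]$ be such that every oriented hyperplane $H$ with $B(p,\epsilon)\subseteq H^+$ is a reflecting hyperplane for $\psi$. Then for all $x,y\in\mathbb{R}^d$ with $\|x-p\|-\|y-p\|>2\epsilon$, we have $\psi(x)\le\psi(y)$.
   Context: $B(p,\epsilon)$ is the open Euclidean ball. An oriented hyperplane is $H=\{x:\langle x,u\rangle=a\}$ with $u$ a unit vector, $a\in\mathbb{R}$; $H^-=\{\langle x,u\rangle<a\}$, $H^+=\{\langle x,u\rangle>a\}$, and $x^H=x-2(\langle x,u\rangle-a)u$. $H$ is a reflecting hyperplane for $\psi$ if $\psi(x)\le\psi(x^H)$ for all $x\in H^-$. *)

(* Defs.v *)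
From mathcomp Require Import all_boot all_order all_algebra.
Set Implicit Arguments. Unset Strict Implicit. Unset Printing Implicit Defensive.
Import Order.TTheory GRing.Theory Num.Theory.
Local Open Scope ring_scope.

Section Euclid.
Variables (R : rcfType) (d : nat).
Implicit Types (x y u p : 'rV[R]_d) (a eps : R).

Definition dotv x y : R := \sum_(i < d) x 0 i * y 0 i.
Definition enorm x : R := Num.sqrt (dotv x x).
Definition oball p eps : pred 'rV[R]_d := fun x => enorm (x - p) < eps.

(* oriented hyperplane H = {<x,u> = a}, with u a unit vector *)
Definition Hminus u a : pred 'rV[R]_d := fun x => dotv x u < a.
Definition Hplus u a : pred 'rV[R]_d := fun x => a < dotv x u.
Definition hrefl u a x : 'rV[R]_d := x - (2 * (dotv x u - a)) *: u.

Definition reflecting (psi : 'rV[R]_d -> R) u a : Prop :=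
  forall x, x \in Hminus u a -> psi x <= psi (hrefl u a x).
End Euclid.

(* Main.v *)
Require Import Defs.
From mathcomp Require Import all_boot all_order all_algebra.
From mathcomp Require Import ring lra.
Import Order.TTheory GRing.Theory Num.Theory.
Set Implicit Arguments. Unset Strict Implicit.
Import Order.TTheory GRing.Theory Num.Theory.
Set Implicit Arguments. Unset Strict Implicit.
Local Open Scope ring_scope.

Section H.
Variables (R : rcfType) (d : nat).
Implicit Types (x y z : 'rV[R]_d).

Lemma dotvDl x y z : dotv (x + y) z = dotv x z + dotv y z.
Proof. by rewrite /dotv -big_split; apply: eq_bigr => i _; rewrite mxE mulrDl. Qed.
Lemma dotvZl a x z : dotv (a *: x) z = a * dotv x z.
Proof. by rewrite /dotv mulr_sumr; apply: eq_bigr => i _; rewrite mxE mulrA. Qed.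
Lemma dotvNl x z : dotv (- x) z = - dotv x z.
Proof. by rewrite -scaleN1r dotvZl mulN1r. Qed.
Lemma dotvBl x y z : dotv (x - y) z = dotv x z - dotv y z.
Proof. by rewrite dotvDl dotvNl. Qed.
Lemma dotvC x y : dotv x y = dotv y x.
Proof. by apply: eq_bigr => i _; rewrite mulrC. Qed.
Lemma dotvDr x y z : dotv z (x + y) = dotv z x + dotv z y.
Proof. by rewrite dotvC dotvDl !(dotvC z). Qed.
Lemma dotvZr a x z : dotv z (a *: x) = a * dotv z x.
Proof. by rewrite dotvC dotvZl dotvC. Qed.
Lemma dotvBr x y z : dotv z (x - y) = dotv z x - dotv z y.
Proof. by rewrite dotvC dotvBl !(dotvC z). Qed.
Lemma dotv_ge0 x : 0 <= dotv x x.
Proof. by apply: sumr_ge0 => i _; rewrite -expr2 sqr_ge0. Qed.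
Lemma enorm_ge0 x : 0 <= enorm x.
Proof. exact: sqrtr_ge0. Qed.
Lemma enorm_sq x : enorm x ^+ 2 = dotv x x.
Proof. by rewrite sqr_sqrtr // dotv_ge0. Qed.

Lemma quad_cs (A B C : R) : 0 <= C -> (forall t, 0 <= A + 2 * t * B + t ^+ 2 * C) ->
  B ^+ 2 <= A * C.
Proof.
move=> C0 H.
have [Cp|] := ltP 0 C.
  have := H (- B / C).
  have -> : A + 2 * (- B / C) * B + (- B / C) ^+ 2 * C = (A * C - B ^+ 2) / C.
    by field; rewrite gt_eqF.
  by rewrite pmulr_lge0 ?invr_gt0 // subr_ge0.
move=> Cle; have C0' : C = 0 by apply/eqP; rewrite eq_le Cle C0.
subst C; rewrite mulr0.
have [B0|Bn] := eqVneq B 0; first by rewrite B0 expr0n.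
have := H (- (A + 1) / (2 * B)).
have -> : A + 2 * (- (A + 1) / (2 * B)) * B + (- (A + 1) / (2 * B)) ^+ 2 * 0 = -1.
  by field; rewrite Bn.
by rewrite ler0N1.
Qed.

Lemma cs x y : dotv x y <= enorm x * enorm y.
Proof.
have h : dotv x y ^+ 2 <= dotv x x * dotv y y.
  apply: quad_cs; first exact: dotv_ge0.
  move=> t; have := dotv_ge0 (x + t *: y).
  rewrite !(dotvDl, dotvDr, dotvZl, dotvZr) (dotvC y x).
  by congr (_ <= _); ring.
apply: (le_trans (ler_norm _)).
rewrite -sqrtrM ?dotv_ge0 // -(sqrtr_sqr (dotv x y)).
by rewrite ler_sqrt // mulr_ge0 ?dotv_ge0.
Qed.
End H.
Lemma enormN (R : rcfType) d (x : 'rV[R]_d) : enorm (- x) = enorm x.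
Proof. by rewrite /enorm dotvNl dotvC dotvNl opprK. Qed.

Theorem lemma5 (R : rcfType) (d : nat) (p : 'rV[R]_d) (eps : R)
    (psi : 'rV[R]_d -> R) :
  0 < eps ->
  (forall x, 0 <= psi x <= 1) ->
  (forall (u : 'rV[R]_d) (a : R), enorm u = 1 ->
     {subset oball p eps <= Hplus u a} -> reflecting psi u a) ->
  forall x y : 'rV[R]_d, 2 * eps < enorm (x - p) - enorm (y - p) ->
    psi x <= psi y.
Proof.
move=> eps0 _ H x y.
have [X ->] : exists X, x = X + p by exists (x - p); rewrite subrK.
have [Y ->] : exists Y, y = Y + p by exists (y - p); rewrite subrK.
rewrite !addrK => hd.
set w := Y + p - (X + p).
have ew : w = Y - X by rewrite /w opprD addrACA subrr addr0.
set n := enorm w.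
have nX0 := enorm_ge0 X; have nY0 := enorm_ge0 Y; have n0 : 0 <= n := enorm_ge0 w.
have sX := enorm_sq X; have sY := enorm_sq Y; have sn : n ^+ 2 = dotv w w := enorm_sq w.
have c1 := cs X Y; have c2 := cs (- X) Y; rewrite enormN dotvNl in c2.
have ewd : dotv w w = dotv X X + dotv Y Y - 2 * dotv X Y.
  by rewrite ew !(dotvBl, dotvBr) (dotvC Y X); ring.
have nlo : enorm X - enorm Y <= n by nra.
have nhi : n <= enorm X + enorm Y by nra.
have np : 0 < n by lra.
set u := n^-1 *: w.
have du v : dotv v u = n^-1 * dotv v w by rewrite dotvZr.
have un : enorm u = 1.
  by rewrite /enorm du dotvC du -sn mulrA -expr2 -exprMn mulVf ?gt_eqF // expr1n sqrtr1.
have dwu : dotv w u = n by rewrite du -sn expr2 mulrA mulVf ?gt_eqF // mul1r.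
set a := (dotv (X + p) u + dotv (Y + p) u) / 2.
have dxy : dotv (Y + p) u - dotv (X + p) u = n by rewrite -dotvBl.
have hm : (X + p) \in Hminus u a by rewrite unfold_in /Hminus /a; lra.
have := H u a un _ _ hm.
have -> : hrefl u a (X + p) = Y + p.
  rewrite /hrefl.
  have -> : 2 * (dotv (X + p) u - a) = - n by rewrite /a; lra.
  by rewrite scaleNr opprK scalerA mulfV ?gt_eqF // scale1r /w addrC subrK.
apply.
move=> z; rewrite !unfold_in /oball /Hplus => hz.
have c3 := cs (- (z - p)) u; rewrite enormN un mulr1 dotvNl in c3.
have ez : dotv z u = dotv p u + dotv (z - p) u by rewrite dotvBl; ring.
have key : n * (2 * dotv p u - dotv (X + p) u - dotv (Y + p) u)
   = dotv X X - dotv Y Y.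
  have du' v : n * dotv v u = dotv v w by rewrite du mulrA mulfV ?gt_eqF // mul1r.
  rewrite !mulrBr mulrCA !du' ew.
  rewrite !(dotvDl, dotvBr, dotvBl) (dotvC Y X) (dotvC p X) (dotvC p Y); ring.
have : 2 * eps < 2 * dotv p u - dotv (X + p) u - dotv (Y + p) u.
  nra.
rewrite /a; lra.
Qed.
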